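(* Let $X_1,X_2,\dots$ be i.i.d. $\mathrm{Bernoulli}(\rho)$ random variables with $\rho>0$, and let $Y_t=\sum_{\tau=1}^tX_\tau$. For any $\delta\in(0,1)$ and $T\in\mathbb{N}$, with probability at least $1-\delta$, $$\sum_{t=1}^T\min\{1/Y_t,1\}\le\mathcal{O}\big(\rho^{-1}\log(T\log T/\delta)\big).$$
   Context: The convention $1/0=+\infty$ is used, so $\min\{1/Y_t,1\}=1$ when $Y_t=0$. $\mathcal{O}(\cdot)$ hides an absolute constant. *)

(* Defs.v *)
From HB Require Import structures.
From mathcomp Require Import all_boot all_order all_algebra.
From mathcomp Require Import all_classical all_reals all_analysis.
Set Implicit Arguments. Unset Strict Implicit. Unset Printing Implicit Defensive.
Import Order.TTheory GRing.Theory Num.Theory.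
Local Open Scope classical_set_scope.
Local Open Scope ring_scope.

Definition mutually_independent d (T : measurableType d) (R : realType)
    (P : probability T R) (X : nat -> {RV P >-> R}) : Prop :=
  forall (S : seq nat) (B : nat -> set R),
    uniq S -> (forall i, measurable (B i)) ->
    P (\bigcap_(i in [set` S]) (X i @^-1` B i)) =
    (\prod_(i <- S) P (X i @^-1` B i))%E.

Definition is_bernoulli d (T : measurableType d) (R : realType)
    (P : probability T R) (rho : R) (X : {RV P >-> R}) : Prop :=
  (forall w, X w = 0 \/ X w = 1) /\ P (X @^-1` [set 1]) = rho%:E.

Definition partial_count (R : realType) (X : nat -> R) (t : nat) : R :=
  \sum_(1 <= tau < t.+1) X tau.

(* min{1/y, 1} with the convention 1/0 = +oo *)
Definition min_inv1 (R : realType) (y : R) : R :=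
  if y == 0 then 1 else Num.min (y^-1) 1.

(* Main.v *)
Require Import Defs.
From HB Require Import structures.
From mathcomp Require Import all_boot all_order all_algebra.
From mathcomp Require Import all_classical all_reals all_analysis.
From mathcomp Require Import ring lra zify.
Import Order.TTheory GRing.Theory Num.Theory.
Local Open Scope classical_set_scope.
Local Open Scope ring_scope.
Section S.
Variable R : realType.
Lemma ln_ge (a : R) : 0 < a -> 1 - a^-1 <= ln a.
Proof.
move=> a0.
have h := @le_ln1Dx R (a^-1 - 1).
have : -1 < a^-1 - 1 by rewrite -subr_gt0 opprK subrK invr_gt0.
move/h.
have -> : 1 + (a^-1 - 1) = a^-1 by rewrite addrC subrK.
 rewrite lnV ?posrE //; lra.
Qed.
Lemma ln_le (a : R) : 0 < a -> ln a <= a - 1.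
Proof.
move=> a0; have := @le_ln1Dx R (a - 1).
have -> : 1 + (a - 1) = a by rewrite addrC subrK.
apply; lra.
Qed.
Lemma harm (m : nat) : (1 <= m)%N -> \sum_(1 <= t < m.+1) (t%:R : R)^-1 <= 1 + ln m%:R.
Proof.
elim: m => // m IH _.
case: m IH => [|m] IH.
  by rewrite big_nat1 invr1 ln1 addr0.
rewrite big_nat_recr //=.
have := IH isT.
have h := @ln_ge ((m.+2)%:R / (m.+1)%:R).
rewrite ln_div ?posrE ?ltr0n // in h.
have : 0 < (m.+2)%:R / (m.+1)%:R :> R by apply divr_gt0; rewrite ltr0n.
move/h.
have -> : 1 - ((m.+2)%:R / (m.+1)%:R :> R)^-1 = (m.+2)%:R^-1.
  rewrite invf_div. field.
  apply/eqP; have := ler0n R m; lra.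
move=> h1 h2; apply: (le_trans (lerD h2 h1)); lra.
Qed.

Lemma count_lt (t0 : R) (m : nat) : 0 <= t0 ->
  \sum_(1 <= t < m.+1) (if t%:R < t0 then 1 else 0 : R) <= t0.
Proof.
move=> t00.
suff : \sum_(1 <= t < m.+1) (if t%:R < t0 then 1 else 0 : R) <= m%:R /\
       \sum_(1 <= t < m.+1) (if t%:R < t0 then 1 else 0 : R) <= t0 by case.
elim: m => [|m [IH1 IH2]]; first by rewrite big_geq.
rewrite big_nat_recr //=.
move: IH1 IH2; set s := \sum_(1 <= i < m.+1) _.
rewrite -natr1.
have := ler0n R m.
case: ifP => h; rewrite -?natr1 in h; move=> *; split; lra.
Qed.

Lemma mi_le1 (y : R) : min_inv1 y <= 1.
Proof. by rewrite /min_inv1; case: eqP => // _; rewrite ge_min lexx orbT. Qed.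

Lemma mi_le_inv (y : R) : 0 < y -> min_inv1 y <= y^-1.
Proof. by move=> y0; rewrite /min_inv1 gt_eqF // ge_min lexx. Qed.

Lemma det_bound (c : nat -> R) (T : nat) (rho t0 : R) : 0 < rho -> 0 <= t0 -> (1 <= T)%N ->
 (forall t, (1 <= t <= T)%N -> t0 <= t%:R -> rho * t%:R / 4 <= c t) ->
 \sum_(1 <= t < T.+1) min_inv1 (c t) <= t0 + 4 / rho * (1 + ln T%:R).
Proof.
move=> r0 t00 T1 H.
apply: (le_trans (y := \sum_(1 <= t < T.+1) ((if t%:R < t0 then 1 else 0) + 4 / rho * t%:R^-1))).
  rewrite big_nat_cond [X in _ <= X]big_nat_cond; apply: ler_sum => t /andP[/andP[t1 tT] _].
  have t0' : (0 : R) < t%:R by rewrite ltr0n.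
  have hpos : 0 <= 4 / rho * t%:R^-1.
    by apply: mulr_ge0; [apply: divr_ge0 => //; apply: ltW|rewrite invr_ge0 ltW].
  have [ht|ht] := ltP (t%:R) t0.
    by apply: le_trans (mi_le1 _) _; rewrite lerDl.
  have hc := H t ltac:(by rewrite t1 -ltnS) ht.
  have cpos : 0 < c t.
    by apply: lt_le_trans hc; apply: divr_gt0 => //; apply: mulr_gt0.
  apply: (le_trans (mi_le_inv _ cpos)); rewrite add0r.
  have -> : 4 / rho * t%:R^-1 = (rho * t%:R / 4)^-1.
    have rn : rho != 0 := lt0r_neq0 r0.
    have tn : t%:R != 0 :> R := lt0r_neq0 t0'.
    by field; rewrite tn rn.
  rewrite lef_pV2 // posrE //; apply: divr_gt0 => //; apply: mulr_gt0 => //.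
rewrite big_split /=; apply: lerD; first exact: count_lt.
rewrite -mulr_sumr; apply: ler_wpM2l; last exact: harm.
by apply: divr_ge0 => //; apply: ltW.
Qed.

Definition bv (b : bool) : R := if b then 1 else 0.
Definition wt (rho : R) (b : bool) : R := if b then rho else 1 - rho.
Definition xv n (x : {ffun 'I_n.+1 -> bool}) (tau : nat) : R := bv (x (inord tau.-1)).
Definition pw n rho (x : {ffun 'I_n.+1 -> bool}) : R := \prod_(j < n.+1) wt rho (x j).

Lemma bv_ge0 b : 0 <= bv b. Proof. by case: b; rewrite /bv. Qed.

Lemma cnt_ord n x t : (t <= n.+1)%N ->
  partial_count (@xv n x) t = \sum_(j < n.+1 | (j < t)%N) bv (x j).
Proof.
move=> tn; rewrite /partial_count big_add1 /= big_mkord.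
rewrite (big_ord_widen n.+1 (fun j => bv (x (inord j)))) //.
by apply: eq_bigr => j _; rewrite inord_val.
Qed.

Lemma pw_ge0 n rho x : 0 <= rho <= 1 -> 0 <= @pw n rho x.
Proof.
move=> /andP[r0 r1]; apply: prodr_ge0 => j _; rewrite /wt; case: (x j) => //.
by rewrite subr_ge0.
Qed.

Lemma pw_sum1 n rho : \sum_(x : {ffun 'I_n.+1 -> bool}) @pw n rho x = 1.
Proof.
rewrite /pw -(bigA_distr_bigA (fun (j : 'I_n.+1) b => wt rho b)) /=.
by apply: big1 => j _; rewrite big_bool /wt; change (rho + (1 - rho) = 1); lra.
Qed.

Lemma chernoff n rho t : 0 <= rho <= 1 -> (t <= n.+1)%N ->
  \sum_(x : {ffun 'I_n.+1 -> bool}) bv (partial_count (@xv n x) t < rho * t%:R / 4)%R * pw n rho x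
    <= expR (- (rho * t%:R / 4)).
Proof.
move=> r01 tn; have /andP[r0 r1] := r01.
set k := rho * t%:R / 4.
pose g (j : 'I_n.+1) (b : bool) : R := wt rho b * expR (- bv ((j < t)%N && b)).
apply: (le_trans (y := \sum_(x : {ffun 'I_n.+1 -> bool}) expR k * \prod_j g j (x j))).
  apply: ler_sum => x _.
  have -> : expR k * \prod_j g j (x j) = expR (k - partial_count (xv n x) t) * pw n rho x.
    rewrite /g big_split /= [RHS]mulrC mulrCA; congr (_ * _).
    rewrite expRD cnt_ord // big_mkcond /= -sumrN expR_sum; congr (_ * _).
    rewrite [RHS]big_mkcond /=; apply: eq_bigr => j _.
    by case: (j < t)%N => //=; rewrite /bv oppr0 expR0.
  apply: ler_wpM2r; first exact: pw_ge0.
  rewrite /bv; case: ifP => h; last exact: expR_ge0.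
  apply: le_trans (expR_ge1Dx _); rewrite lerDl subr_ge0 ltW //.
rewrite -mulr_sumr -(bigA_distr_bigA g) /=.
apply: (le_trans (y := expR k * \prod_(j < n.+1) (if (j < t)%N then expR (- (rho / 2)) else 1))).
  apply: ler_wpM2l; first exact: expR_ge0.
  apply: ler_prod => j _; apply/andP; split.
    by rewrite big_bool /g; apply: addr_ge0; apply: mulr_ge0; rewrite /wt ?subr_ge0 ?expR_ge0.
  rewrite big_bool /g /wt /bv /= andbT andbF oppr0 expR0 mulr1.
  case: ifP => _; last by rewrite oppr0 expR0 mulr1; lra.
  apply: le_trans (expR_ge1Dx _).
  have e2 : 2 <= expR (1 : R) by have := expR_ge1Dx (1 : R).
  have : expR (- (1 : R)) <= 2^-1.
    by rewrite expRN lef_pV2 ?posrE ?expR_gt0.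
  move=> h; have := ler_wpM2l r0 h. lra.
rewrite -big_mkcond /= -(big_ord_widen n.+1 (fun _ => expR (- (rho / 2)))) //.
rewrite prodr_const card_ord -expRM_natl -expRD ler_expR /k; lra.
Qed.

Lemma bad_bound n rho delta (good : {ffun 'I_n.+1 -> bool} -> bool) :
  0 < rho <= 1 -> 0 < delta ->
  (forall x, (forall t, (1 <= t <= n.+1)%N -> 4 / rho * ln (n.+1%:R / delta) <= t%:R ->
      rho * t%:R / 4 <= partial_count (xv n x) t) -> good x) ->
  \sum_x bv (~~ good x) * pw n rho x <= delta.
Proof.
move=> /andP[r0 r1] d0 H.
have r01 : 0 <= rho <= 1 by rewrite ltW.
set t0 := 4 / rho * ln (n.+1%:R / delta).
apply: (le_trans (y := \sum_x (\sum_(1 <= t < n.+2)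
   bv (t0 <= t%:R)%R * bv (partial_count (xv n x) t < rho * t%:R / 4)%R) * pw n rho x)).
  apply: ler_sum => x _; apply: ler_wpM2r; first exact: pw_ge0.
  have sg0 : 0 <= \sum_(1 <= t < n.+2)
     bv (t0 <= t%:R)%R * bv (partial_count (xv n x) t < rho * t%:R / 4)%R.
    by apply: sumr_ge0 => t _; apply: mulr_ge0; apply: bv_ge0.
  case: (boolP (good x)) => gx; first by rewrite /bv /=.
  case: (pselect (exists t, (1 <= t <= n.+1)%N /\ t0 <= t%:R /\
                 partial_count (xv n x) t < rho * t%:R / 4)); last first.
    move=> nex; exfalso; move/negP: gx; apply; apply: H => t ht h1.
    rewrite leNgt; apply/negP => h2; apply: nex; exists t; split => //.
  move=> [t [ht [h1 h2]]].
  rewrite (bigD1_seq t) ?iota_uniq //=; last by rewrite mem_iota; case/andP: ht => -> /=; rewrite addnC addn1 ltnS.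
  rewrite /bv h1 h2 mulr1 /= lerDl.
  rewrite big_seq_cond; apply: sumr_ge0 => i _; apply: mulr_ge0; apply: bv_ge0.
under eq_bigr do rewrite mulr_suml.
rewrite exchange_big /=.
apply: (le_trans (y := \sum_(1 <= t < n.+2) (delta / n.+1%:R))).
  rewrite big_nat_cond [X in _ <= X]big_nat_cond; apply: ler_sum => t /andP[/andP[t1 tT] _].
  under eq_bigr do rewrite -mulrA.
  rewrite -mulr_sumr.
  have Tp : (0 : R) < n.+1%:R by rewrite ltr0n.
  rewrite /bv; case: ifP => h1; last by rewrite mul0r; apply: divr_ge0; rewrite ltW.
  rewrite mul1r; apply: (le_trans (chernoff n rho t r01 _)); first by rewrite -ltnS.
  have -> : delta / n.+1%:R = expR (- (rho * t0 / 4)).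
    have -> : rho * t0 / 4 = ln (n.+1%:R / delta).
      rewrite /t0; field; exact: lt0r_neq0.
    rewrite expRN lnK ?invf_div // posrE; apply: divr_gt0 => //.
  rewrite ler_expR lerN2; apply: ler_wpM2r => //; apply: ler_wpM2l; [exact: ltW | exact: h1].
rewrite sumr_const_nat subn1 /=.
have -> : (delta / n.+1%:R) *+ n.+1 = delta / n.+1%:R * n.+1%:R by rewrite mulr_natr.
by rewrite divfK // pnatr_eq0.
Qed.

Lemma ln2_ge : 7 / 12 <= ln (2 : R).
Proof.
have -> : (2 : R) = (4 / 3) * (3 / 2) by field.
rewrite lnM ?posrE ?divr_gt0 //.
have h1 := @ln_ge (4 / 3); have h2 := @ln_ge (3 / 2).
rewrite !invf_div in h1 h2.
have := h1 ltac:(by apply: divr_gt0); have := h2 ltac:(by apply: divr_gt0).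
lra.
Qed.

Lemma final_num n (rho delta : R) : (1 <= n)%N -> 0 < rho -> 0 < delta < 1 ->
  4 / rho * ln (n.+1%:R / delta) + 4 / rho * (1 + ln n.+1%:R)
    <= 100 * rho^-1 * ln (n.+1%:R * ln n.+1%:R / delta).
Proof.
move=> n1 r0 /andP[d0 d1].
set T : R := n.+1%:R.
have T2 : 2 <= T by rewrite /T (ler_nat R 2 n.+1) ltnS.
have Tp : 0 < T by lra.
have a7 : 7 / 12 <= ln T.
  apply: le_trans ln2_ge _; rewrite ler_ln ?posrE //; lra.
have ap : 0 < ln T by lra.
have hb : -(5 / 7) <= ln (ln T).
  have := ln_ge _ ap.
  have : (ln T)^-1 <= 12 / 7.
    rewrite -invf_div lef_pV2 ?posrE ?divr_gt0 //.
  lra.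
have hdl : ln delta <= 0 by apply: ln_le0; lra.
have eL : ln (T * ln T / delta) = ln T + ln (ln T) - ln delta.
  rewrite ln_div ?posrE ?mulr_gt0 // lnM ?posrE //.
have eT : ln (T / delta) = ln T - ln delta by rewrite ln_div ?posrE.
have hL : 1 / 7 <= ln T + ln (ln T).
  rewrite -lnM ?posrE //.
  have h7 : 7 / 6 <= T * ln T.
    have : 2 * (7 / 12) <= T * ln T by apply: ler_pM => //; lra.
    lra.
  have Tlp : 0 < T * ln T by lra.
  have := ln_ge _ Tlp.
  have : (T * ln T)^-1 <= 6 / 7.
    rewrite -invf_div lef_pV2 ?posrE ?divr_gt0 ?mulr_gt0 //.
  move=> h2 h1; apply: le_trans h1; rewrite lerBrDr; apply: le_trans (lerD (lexx _) h2) _; lra.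
have key : 4 * ln (T / delta) + 4 * (1 + ln T) <= 100 * ln (T * ln T / delta).
  rewrite eL eT; lra.
have -> : 4 / rho * ln (T / delta) + 4 / rho * (1 + ln T) =
   rho^-1 * (4 * ln (T / delta) + 4 * (1 + ln T)) by ring.
rewrite -mulrA [_ * (rho^-1 * _)]mulrCA; apply: ler_wpM2l => //.
by rewrite invr_ge0 ltW.
Qed.
End S.

Arguments bv {R} b.
Arguments wt {R} rho b.
Arguments xv {R} n x tau.
Arguments pw {R} n rho x.

Section Meas.
Variables (R : realType) (d : measure_display) (Omega : measurableType d)
  (P : probability Omega R) (rho : R) (X : nat -> {RV P >-> R}).
Hypothesis hB : forall n, is_bernoulli rho (X n).
Hypothesis hI : mutually_independent X.

Lemma X01 i w : X i w = bv (X i w == 1).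
Proof. by case: (proj1 (hB i) w) => ->; rewrite /bv ?eqxx // eq_sym oner_eq0. Qed.

Lemma Pset1 i b : P (X i @^-1` [set bv b]) = (wt rho b)%:E.
Proof.
case: b; first by rewrite /bv /wt (proj2 (hB i)).
have -> : X i @^-1` [set bv false] = ~` (X i @^-1` [set 1]).
  apply/seteqP; split => w /=; rewrite /bv.
    by move=> ->; apply/eqP; rewrite eq_sym oner_eq0.
  by case: (proj1 (hB i) w) => -> //.
by rewrite probability_setC ?(proj2 (hB i)) ?EFinB //; apply: measurable_funPTI; exact: measurable_set1.
Qed.

Lemma rho_le1 : rho <= 1.
Proof.
have := probability_le1 P (measurable_funPTI (X 0) (measurable_set1 1)).
by rewrite (proj2 (hB 0)) lee_fin.
Qed.

Definition pat m w : {ffun 'I_m.+1 -> bool} := [ffun j : 'I_m.+1 => X j.+1 w == 1].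
Definition cell m (x : {ffun 'I_m.+1 -> bool}) :=
  \bigcap_(i in [set` iota 1 m.+1]) (X i @^-1` [set bv (x (inord i.-1))]).

Lemma cellP m x w : cell m x w <-> pat m w = x.
Proof.
split.
  move=> h; apply/ffunP => j; rewrite ffunE.
  have hj : j.+1 \in iota 1 m.+1 by rewrite mem_iota; apply/andP; split => //; rewrite add1n ltnS; exact: ltn_ord.
  have := h j.+1 hj.
  rewrite /= inord_val; case: (x j) => /= ->; rewrite /bv ?eqxx //.
  by rewrite eq_sym oner_eq0.
move=> <- i hi.
have /andP[i1 im] : (1 <= i < 1 + m.+1)%N by rewrite -mem_iota.
rewrite /preimage /= ffunE inordK ?prednK //; first exact: X01.
Qed.

Lemma cell_meas m x : measurable (cell m x).
Proof.
apply: fin_bigcap_measurable; first exact: finite_seq.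
by move=> i _; apply: measurable_funPTI; exact: measurable_set1.
Qed.

Lemma Pcell m x : P (cell m x) = (pw m rho x)%:E.
Proof.
rewrite /cell hI ?iota_uniq //.
under eq_bigr do rewrite Pset1.
rewrite prodEFin /pw; congr EFin.
rewrite -[iota 1 m.+1]/(index_iota 1 m.+2) big_add1 /= big_mkord.
by apply: eq_bigr => j _; rewrite inord_val.
Qed.

Lemma sum_eq m w :
  \sum_(1 <= t < m.+2) min_inv1 (partial_count (fun tau => X tau w) t) =
  \sum_(1 <= t < m.+2) min_inv1 (partial_count (xv m (pat m w)) t).
Proof.
rewrite big_nat_cond [RHS]big_nat_cond; apply: eq_bigr => t /andP[/andP[t1 tm] _].
congr min_inv1.
rewrite /partial_count big_nat_cond [RHS]big_nat_cond; apply: eq_bigr => tau /andP[/andP[u1 ut] _].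
rewrite /xv ffunE inordK ?prednK //; first exact: X01.
lia.
Qed.
End Meas.
Arguments X01 {R d Omega P rho X} hB i w.
Arguments Pset1 {R d Omega P rho X} hB i b.
Arguments rho_le1 {R d Omega P rho X} hB.
Arguments pat {R d Omega P} X m w.
Arguments cell {R d Omega P} X m x.
Arguments cellP {R d Omega P rho X} hB m x w.
Arguments cell_meas {R d Omega P} X m x.
Arguments Pcell {R d Omega P rho X} hB hI m x.
Arguments sum_eq {R d Omega P rho X} hB m w.

Theorem lemma8 (R : realType) :
  exists C : R, 0 < C /\
  forall (d : measure_display) (Omega : measurableType d)
    (P : probability Omega R) (rho : R) (X : nat -> {RV P >-> R})
    (delta : R) (T : nat),
    0 < rho -> (forall n, is_bernoulli rho (X n)) -> mutually_independent X ->
    0 < delta < 1 -> (2 <= T)%N ->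
    ((1 - delta)%:E <=
     P [set w | (\sum_(1 <= t < T.+1)
                   min_inv1 (partial_count (fun tau => X tau w) t)
                <= C * rho^-1 * ln (T%:R * ln T%:R / delta))%R])%E.
Proof.
exists 100; split => //.
move=> d Omega P rho X delta T r0 hB hI /andP[d0 d1].
case: T => [|[|n]] // _.
have r1 := rho_le1 hB.
set Bd := 100 * rho^-1 * ln (n.+2%:R * ln n.+2%:R / delta).
pose good (x : {ffun 'I_n.+2 -> bool}) :=
  (\sum_(1 <= t < n.+3) min_inv1 (partial_count (xv n.+1 x) t) <= Bd)%R.
have -> : [set w | (\sum_(1 <= t < n.+3)
                   min_inv1 (partial_count (fun tau => X tau w) t) <= Bd)%R] =
          \bigcup_(x in [set x | good x]) cell X n.+1 x.
  apply/seteqP; split => w /=.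
    move=> h; exists (pat X n.+1 w); last exact/(cellP hB).
    by rewrite /= /good -(sum_eq hB).
  move=> [x gx /(cellP hB) cx]; rewrite (sum_eq hB); rewrite cx; exact: gx.
rewrite measure_fin_bigcup //; first last.
- by move=> x _; exact: cell_meas.
- by move=> x y _ _ [w [/(cellP hB) hx /(cellP hB) hy]]; rewrite -hx -hy.
- exact: finite_finset.
rewrite (fsbigE [seq x <- enum {ffun 'I_n.+2 -> bool} | good x]); last 3 first.
- by rewrite filter_uniq // enum_uniq.
- by move=> x /=; rewrite mem_filter => /andP[].
- by move=> x /= gx; rewrite mem_filter mem_enum gx.
rewrite big_filter_cond.
rewrite (eq_bigr (fun x => (pw n.+1 rho x)%:E)); last by move=> x _; exact: Pcell.
rewrite sumEFin lee_fin big_enum_cond /=.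
rewrite (eq_bigl good); last first.   by move=> x; case gx: (good x) => //=; apply/idP; rewrite in_setE /= gx.
have r01 : 0 < rho <= 1 by rewrite r0 r1.
have hT : 1 <= n.+2%:R / delta :> R.
  by rewrite ler_pdivlMr // mul1r; apply: le_trans (ltW d1) _; rewrite ler1n.
have t00 : 0 <= 4 / rho * ln (n.+2%:R / delta).
  by apply: mulr_ge0; [apply: divr_ge0 => //; apply: ltW | apply: ln_ge0].
have hbad := bad_bound R n.+1 rho delta good r01 d0.
have {hbad}hbad : \sum_x bv (~~ good x) * pw n.+1 rho x <= delta.
  apply: hbad => x hx; rewrite /good.
  apply: le_trans (det_bound R _ n.+2 rho _ r0 t00 _ hx) _ => //.
  apply: final_num => //; by rewrite d0 d1.
have h1 := pw_sum1 R n.+1 rho.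
rewrite (bigID good) /= in h1.
have h2 : \sum_(x | ~~ good x) pw n.+1 rho x = \sum_x bv (~~ good x) * pw n.+1 rho x.
  by rewrite big_mkcond; apply: eq_bigr => x _; rewrite /bv; case: (~~ good x); rewrite ?mul1r ?mul0r.
rewrite -h2 in hbad.
lra.
Qed.
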